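(* Let $\mathbb{T}$ be a time scale, $\alpha\in]0,1]$, and let $f,g:\mathbb{T}\to\mathbb{R}$ be nabla fractional differentiable of order $\alpha$ at $t\in\mathbb{T}_\kappa$. Then: (i) $f+g$ is nabla fractional differentiable of order $\alpha$ at $t$ with $(f+g)^{\nabla^\alpha}(t)=f^{\nabla^\alpha}(t)+g^{\nabla^\alpha}(t)$; (ii) for every $\lambda\in\mathbb{R}$, $\lambda f$ is nabla fractional differentiable of order $\alpha$ at $t$ with $(\lambda f)^{\nabla^\alpha}(t)=\lambda f^{\nabla^\alpha}(t)$; (iii) if $f$ and $g$ are continuous, then $fg$ is nabla fractional differentiable of order $\alpha$ at $t$ with $$(fg)^{\nabla^\alpha}(t)=f^{\nabla^\alpha}(t)g(t)+f^\rho(t)g^{\nabla^\alpha}(t)=f^{\nabla^\alpha}(t)g^\rho(t)+f(t)g^{\nabla^\alpha}(t);$$ (iv) if $f$ is continuous and $f^\rho(t)f(t)\neq0$, then $1/f$ is nabla fractional differentiable of order $\alpha$ at $t$ with $\left(\frac1f\right)^{\nabla^\alpha}(t)=-\frac{f^{\nabla^\alpha}(t)}{f^\rho(t)f(t)}$; (v) if $f$ and $g$ are continuous and $g^\rho(t)g(t)\neq0$, then $f/g$ is nabla fractional differentiable of order $\alpha$ at $t$ with $$\left(\frac fg\right)^{\nabla^\alpha}(t)=\frac{f^{\nabla^\alpha}(t)g(t)-f(t)g^{\nabla^\alpha}(t)}{g^\rho(t)g(t)}.$$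
   Context: A time scale $\mathbb{T}$ is a nonempty closed subset of $\mathbb{R}$ with the induced topology. $\rho(t)=\sup\{s\in\mathbb{T}: s<t\}$ (with $\sup\emptyset=\inf\mathbb{T}$), $\sigma(t)=\inf\{s\in\mathbb{T}:s>t\}$ (with $\inf\emptyset=\sup\mathbb{T}$), $f^\rho=f\circ\rho$. $\mathbb{T}_\kappa=\mathbb{T}\setminus\{\inf\mathbb{T}\}$ if $\inf\mathbb{T}$ is finite with $\sigma(\inf\mathbb{T})>\inf\mathbb{T}$, otherwise $\mathbb{T}_\kappa=\mathbb{T}$. Let $A=\,]0,1]\cap\{1/q: q\text{ odd positive integer}\}$; for $\alpha=1/q\in A$, $x^\alpha$ is the real $q$-th root. For $t\in\mathbb{T}_\kappa$, $f^{\nabla^\alpha}(t)$ is the real number (if it exists) such that for every $\varepsilon>0$ there is $\delta>0$ with $\big|[f(s)-f^\rho(t)]-f^{\nabla^\alpha}(t)[s-\rho(t)]^\alpha\big|\le\varepsilon|s-\rho(t)|^\alpha$ for all $s\in\,]t-\delta,t+\delta[\,\cap\mathbb{T}$ if $\alpha\in A$, resp. all $s\in[t,t+\delta[\,\cap\mathbb{T}$ if $\alpha\notin A$; if it exists, $f$ is nabla fractional differentiable of order $\alpha$ at $t$. *)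

(* Defs.v *)
From HB Require Import structures.
From mathcomp Require Import all_boot all_order all_algebra.
From mathcomp Require Import all_classical all_reals all_analysis.
Set Implicit Arguments. Unset Strict Implicit. Unset Printing Implicit Defensive.
Import Order.TTheory GRing.Theory Num.Theory.
Import numFieldNormedType.Exports.
Local Open Scope classical_set_scope.
Local Open Scope ring_scope.

Section TimeScale.
Variable R : realType.

Definition time_scale (T : set R) : Prop := T !=set0 /\ closed T.

Definition inf_finite (T : set R) : Prop := has_lbound T.

Definition rho (T : set R) (t : R) : R :=
  let E := [set s | T s /\ s < t] in
  if E == set0 then inf T else sup E.

Definition sigma (T : set R) (t : R) : R :=
  let E := [set s | T s /\ t < s] in
  if E == set0 then sup T else inf E.

Definition T_kappa (T : set R) : set R :=
  if `[< inf_finite T /\ inf T < sigma T (inf T) >]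
  then T `\ inf T else T.

Definition in_A (alpha : R) : Prop :=
  exists q : nat, odd q /\ alpha = (q%:R)^-1.

(* x^alpha: real q-th root (odd) for alpha = 1/q in A; otherwise the usual
   power (only used on nonnegative arguments for alpha outside A). *)
Definition fpow (alpha x : R) : R :=
  if `[< in_A alpha >] && (x < 0) then - (`|x| `^ alpha) else `|x| `^ alpha.

Definition is_nabla_frac_deriv (T : set R) (alpha : R) (f : R -> R) (t D : R)
  : Prop :=
  forall eps : R, 0 < eps -> exists2 delta : R, 0 < delta &
    forall s : R, T s ->
      (if `[< in_A alpha >] then `|s - t| < delta else t <= s < t + delta) ->
      `| (f s - f (rho T t)) - D * fpow alpha (s - rho T t) |
        <= eps * `|s - rho T t| `^ alpha.

Definition nabla_frac_differentiable (T : set R) (alpha : R) (f : R -> R)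
  (t : R) : Prop := exists D, is_nabla_frac_deriv T alpha f t D.

End TimeScale.

(* Main.v *)
Require Import Defs.
From HB Require Import structures.
From mathcomp Require Import all_boot all_order all_algebra.
From mathcomp Require Import all_classical all_reals all_analysis.
From mathcomp Require Import lra ring.
Import Order.TTheory GRing.Theory Num.Theory.
Import numFieldNormedType.Exports.
Local Open Scope classical_set_scope.
Local Open Scope ring_scope.

Section Aux.
Local Set Implicit Arguments.
Variable R : realType.
Implicit Types (T : set R) (f g : R -> R).

Lemma kappa_in T t : T_kappa T t -> T t.
Proof. by rewrite /T_kappa; case: ifP => _ //; case. Qed.

Definition cont_at T f t := forall e : R, 0 < e ->
  exists2 d, 0 < d & forall s, T s -> `|s - t| < d -> `|f s - f t| < e.

Lemma cont_atP T f t :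
  {within T, continuous f} -> T t -> cont_at T f t.
Proof.
move=> /subspace_continuousP H Tt e e0.
have := (cvgrPdist_lt _ _).1 (H t Tt) e e0.
rewrite near_withinE => -[d /= d0 Hd].
exists d => // s Ts st; rewrite distrC; apply: Hd => //=.
by rewrite distrC.
Qed.

Definition nb (alpha t d s : R) :=
  if `[< in_A alpha >] then `|s - t| < d else t <= s < t + d.

Lemma nb_lt alpha t d s : nb alpha t d s -> `|s - t| < d.
Proof.
rewrite /nb; case: ifP => _ //; move=> /andP[h1 h2].
rewrite ger0_norm ?subr_ge0 //; lra.
Qed.

Lemma nb_mono alpha t d1 d2 s : d1 <= d2 -> nb alpha t d1 s -> nb alpha t d2 s.
Proof.
rewrite /nb => h; case: ifP => _; first by move=> h1; apply: lt_le_trans h1 h.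
by move=> /andP[h1 h2]; rewrite h1 /=; apply: lt_le_trans h2 _; rewrite lerD2l.
Qed.

Lemma derivP T alpha f t D :
  is_nabla_frac_deriv T alpha f t D <->
  (forall eps : R, 0 < eps -> exists2 delta : R, 0 < delta &
    forall s : R, T s -> nb alpha t delta s ->
      `| (f s - f (rho T t)) - D * fpow alpha (s - rho T t) |
        <= eps * `|s - rho T t| `^ alpha).
Proof. by []. Qed.

Lemma fpow_norm (alpha x : R) : `|fpow alpha x| = `|x| `^ alpha.
Proof.
rewrite /fpow; case: ifP => _; first by rewrite normrN ger0_norm // powR_ge0.
by rewrite ger0_norm // powR_ge0.
Qed.

Lemma part (eps m K x y : R) : 0 < eps -> 0 <= m -> 0 <= K -> 0 <= x ->
  0 <= y -> x <= eps / (3 * (K + 1)) * m -> y <= K -> x * y <= eps / 3 * m.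
Proof.
move=> e0 m0 K0 x0 y0 hx hy.
set c := eps / (3 * (K + 1)) in hx.
have c0 : 0 <= c by apply: divr_ge0; [lra | apply: mulr_ge0; lra].
have hc : c * m * (K + 1) = eps / 3 * m.
  rewrite /c; field; apply: lt0r_neq0; lra.
have cm : 0 <= c * m by rewrite mulr_ge0.
have h1 : x * y <= c * m * y by rewrite ler_wpM2r.
have h2 : c * m * y <= c * m * K by rewrite ler_wpM2l.
rewrite -hc; nra.
Qed.

Lemma inv_le (x y : R) : 0 < y -> y <= x -> x^-1 <= y^-1.
Proof.
move=> y0 yx; rewrite lef_pV2 // posrE //; exact: lt_le_trans yx.
Qed.

Lemma deriv_ext T alpha f1 f2 t D1 D2 :
  (forall x, f1 x = f2 x) -> D1 = D2 ->
  is_nabla_frac_deriv T alpha f1 t D1 -> is_nabla_frac_deriv T alpha f2 t D2.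
Proof.
move=> h <-; have -> : f2 = f1 by apply/funext => x; rewrite h.
by [].
Qed.

Lemma deriv_add T alpha f g t Df Dg :
  is_nabla_frac_deriv T alpha f t Df -> is_nabla_frac_deriv T alpha g t Dg ->
  is_nabla_frac_deriv T alpha (fun x => f x + g x) t (Df + Dg).
Proof.
move=> /derivP hf /derivP hg; apply/derivP => eps e0.
have e2 : 0 < eps / 2 by rewrite divr_gt0.
have [d1 d10 H1] := hf _ e2; have [d2 d20 H2] := hg _ e2.
exists (Num.min d1 d2); first by rewrite lt_min d10 d20.
move=> s Ts hs.
have hs1 : nb alpha t d1 s by apply: nb_mono hs; rewrite ge_min lexx.
have hs2 : nb alpha t d2 s by apply: nb_mono hs; rewrite ge_min lexx orbT.
set r := rho T t; set w := fpow alpha (s - r).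
have -> : f s + g s - (f r + g r) - (Df + Dg) * w =
  (f s - f r - Df * w) + (g s - g r - Dg * w) by ring.
apply: le_trans (ler_normD _ _) _.
have := H1 s Ts hs1; have := H2 s Ts hs2; rewrite -/r -/w => a b.
set m := `|s - r| `^ alpha in a b *.
lra.
Qed.

Lemma deriv_const T alpha t c : is_nabla_frac_deriv T alpha (fun _ => c) t 0.
Proof.
apply/derivP => eps e0; exists 1 => // s _ _.
rewrite subrr mul0r subr0 normr0; apply: mulr_ge0; [exact: ltW | exact: powR_ge0].
Qed.

Lemma cont_const T t c : cont_at T (fun _ => c) t.
Proof. by move=> e e0; exists 1 => // s _ _; rewrite subrr normr0. Qed.


Lemma deriv_mul1 T alpha f g t Df Dg :
  is_nabla_frac_deriv T alpha f t Df -> is_nabla_frac_deriv T alpha g t Dg ->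
  cont_at T g t ->
  is_nabla_frac_deriv T alpha (fun x => f x * g x) t
    (Df * g t + f (rho T t) * Dg).
Proof.
move=> /derivP hf /derivP hg hc; apply/derivP => eps e0.
set r := rho T t.
set M := `|g t| + 1.
have M0 : 0 <= M by rewrite /M; have := normr_ge0 (g t); lra.
set K2 := `|Df|; set K3 := `|f r|.
have K20 : 0 <= K2 by exact: normr_ge0.
have K30 : 0 <= K3 by exact: normr_ge0.
have pos (K : R) : 0 <= K -> 0 < eps / (3 * (K + 1)).
  move=> K0; apply: divr_gt0 => //; apply: mulr_gt0; lra.
have [d1 d10 H1] := hf _ (pos _ M0).
have [d3 d30 H3] := hg _ (pos _ K30).
have e20 : 0 < Num.min 1 (eps / (3 * (K2 + 1))) by rewrite lt_min ltr01 pos.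
have [d0 d00 H0] := hc _ e20.
exists (Num.min d0 (Num.min d1 d3)).
  by rewrite !lt_min d00 d10 d30.
move=> s Ts hs.
have hs1 : nb alpha t d1 s by apply: nb_mono hs; rewrite !ge_min lexx orbT.
have hs3 : nb alpha t d3 s by apply: nb_mono hs; rewrite !ge_min lexx !orbT.
have hs0 : `|s - t| < d0.
  have := nb_lt _ _ _ _ hs; have : Num.min d0 (Num.min d1 d3) <= d0 by rewrite ge_min lexx. lra.
have := H0 s Ts hs0; rewrite lt_min => /andP[hg1 hg2].
have := H1 s Ts hs1; have := H3 s Ts hs3; rewrite -/r => b3 b1.
set w := fpow alpha (s - r) in b1 b3 *.
set m := `|s - r| `^ alpha in b1 b3 *.
have hm : `|w| = m by rewrite /w fpow_norm.
have m0 : 0 <= m by exact: powR_ge0.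
have -> : f s * g s - f r * g r - (Df * g t + f r * Dg) * w =
  (f s - f r - Df * w) * g s + Df * w * (g s - g t) + f r * (g s - g r - Dg * w)
  by ring.
have hgs : `|g s| <= M.
  have := ler_normD (g t) (g s - g t); rewrite addrCA subrr addr0 /M; lra.
have t1 : `|(f s - f r - Df * w) * g s| <= eps / 3 * m.
  rewrite normrM; apply: (@part eps m M) => //; exact: normr_ge0.
have t2 : `|Df * w * (g s - g t)| <= eps / 3 * m.
  rewrite !normrM hm.
  have := @part eps m K2 (`|g s - g t| * m) K2 e0 m0 K20.
  have h : `|g s - g t| * m <= eps / (3 * (K2 + 1)) * m.
    by rewrite ler_wpM2r // ltW.
  move=> /(_ (mulr_ge0 (normr_ge0 _) m0) K20 h (lexx _)).
  rewrite /K2; lra.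
have t3 : `|f r * (g s - g r - Dg * w)| <= eps / 3 * m.
  rewrite normrM mulrC; apply: (@part eps m K3) => //; exact: normr_ge0.
apply: le_trans (ler_normD _ _) _.
have := ler_normD ((f s - f r - Df * w) * g s) (Df * w * (g s - g t)).
lra.
Qed.

Lemma deriv_inv T alpha f t Df :
  is_nabla_frac_deriv T alpha f t Df -> cont_at T f t ->
  f (rho T t) != 0 -> f t != 0 ->
  is_nabla_frac_deriv T alpha (fun x => (f x)^-1) t
    (- (Df / (f (rho T t) * f t))).
Proof.
move=> /derivP hf hc fr0 ft0; apply/derivP => eps e0.
set r := rho T t in fr0 *.
set a := `|f t|; set b := `|f r|.
have a0 : 0 < a by rewrite normr_gt0.
have b0 : 0 < b by rewrite normr_gt0.
have ab0 : 0 < a / 2 * b by apply: mulr_gt0 => //; apply: divr_gt0.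
have aab0 : 0 < a / 2 * a * b by apply: mulr_gt0 => //; apply: mulr_gt0 => //; apply: divr_gt0.
set K1 := (a / 2 * b)^-1.
set K2 := `|Df| * (a / 2 * a * b)^-1.
have K10 : 0 <= K1 by rewrite invr_ge0 ltW.
have K20 : 0 <= K2 by rewrite mulr_ge0 // invr_ge0 ltW.
have pos (K : R) : 0 <= K -> 0 < eps / (3 * (K + 1)).
  move=> K0; apply: divr_gt0 => //; apply: mulr_gt0; lra.
have [d1 d10 H1] := hf _ (pos _ K10).
have e20 : 0 < Num.min (a / 2) (eps / (3 * (K2 + 1))).
  by rewrite lt_min pos // andbT divr_gt0.
have [d0 d00 H0] := hc _ e20.
exists (Num.min d0 d1); first by rewrite lt_min d00 d10.
move=> s Ts hs.
have hs1 : nb alpha t d1 s by apply: nb_mono hs; rewrite ge_min lexx orbT.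
have hs0 : `|s - t| < d0.
  apply: lt_le_trans (nb_lt _ _ _ _ hs) _; by rewrite ge_min lexx.
have := H0 s Ts hs0; rewrite lt_min => /andP[hf1 hf2].
have := H1 s Ts hs1; rewrite -/r => b1.
set w := fpow alpha (s - r) in b1 *.
set m := `|s - r| `^ alpha in b1 *.
have hm : `|w| = m by rewrite /w fpow_norm.
have m0 : 0 <= m by exact: powR_ge0.
have hfs : a / 2 <= `|f s|.
  have := ler_normD (f s) (f t - f s); rewrite addrCA subrr addr0 distrC -/a.
  lra.
have fs0 : f s != 0 by rewrite -normr_gt0; lra.
have -> : (f s)^-1 - (f r)^-1 - - (Df / (f r * f t)) * w =
  - (f s - f r - Df * w) * (f s * f r)^-1 +
  (f s - f t) * w * (Df * (f s * f t * f r)^-1).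
  by field; rewrite fs0 fr0 ft0.
have y1 : `|(f s * f r)^-1| <= K1.
  rewrite normfV normrM -/b; apply: inv_le => //; rewrite ler_wpM2r //; lra.
have y2 : `|Df * (f s * f t * f r)^-1| <= K2.
  rewrite normrM normfV !normrM -/a -/b; apply: ler_wpM2l => //.
  apply: inv_le => //; apply: ler_wpM2r; [exact: ltW | apply: ler_wpM2r; [exact: ltW | exact: hfs]].
have t1 : `|- (f s - f r - Df * w) * (f s * f r)^-1| <= eps / 3 * m.
  rewrite normrM normrN; apply: (@part eps m K1) => //; exact: normr_ge0.
have t2 : `|(f s - f t) * w * (Df * (f s * f t * f r)^-1)| <= eps / 3 * m.
  rewrite normrM normrM hm.
  have h : `|f s - f t| * m <= eps / (3 * (K2 + 1)) * m.
    by rewrite ler_wpM2r // ltW.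
  exact: (@part eps m K2 _ _ e0 m0 K20 (mulr_ge0 (normr_ge0 _) m0)
            (normr_ge0 _) h y2).
apply: le_trans (ler_normD _ _) _.
have : 0 <= eps * m by rewrite mulr_ge0 // ltW.
lra.
Qed.

Lemma deriv_mul2 T alpha f g t Df Dg :
  is_nabla_frac_deriv T alpha f t Df -> is_nabla_frac_deriv T alpha g t Dg ->
  cont_at T f t ->
  is_nabla_frac_deriv T alpha (fun x => f x * g x) t
    (Df * g (rho T t) + f t * Dg).
Proof.
move=> hf hg hc; have := deriv_mul1 hg hf hc.
apply: deriv_ext => [x|]; by rewrite mulrC // addrC mulrC (mulrC (g _)).
Qed.

End Aux.

Theorem theorem3p10 (R : realType) (T : set R) (alpha : R) (f g : R -> R)
  (t Df Dg : R) :
  time_scale T -> 0 < alpha <= 1 -> T_kappa T t ->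
  is_nabla_frac_deriv T alpha f t Df -> is_nabla_frac_deriv T alpha g t Dg ->
  [/\ (* (i) *)
      is_nabla_frac_deriv T alpha (fun x => f x + g x) t (Df + Dg),
      (* (ii) *)
      (forall lambda : R,
         is_nabla_frac_deriv T alpha (fun x => lambda * f x) t (lambda * Df)),
      (* (iii) *)
      ({within T, continuous f} -> {within T, continuous g} ->
         is_nabla_frac_deriv T alpha (fun x => f x * g x) t
           (Df * g t + f (rho T t) * Dg)
         /\ is_nabla_frac_deriv T alpha (fun x => f x * g x) t
           (Df * g (rho T t) + f t * Dg)),
      (* (iv) *)
      ({within T, continuous f} -> f (rho T t) * f t != 0 ->
         is_nabla_frac_deriv T alpha (fun x => (f x)^-1) t
           (- (Df / (f (rho T t) * f t))))
    & (* (v) *)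
      ({within T, continuous f} -> {within T, continuous g} ->
         g (rho T t) * g t != 0 ->
         is_nabla_frac_deriv T alpha (fun x => f x / g x) t
           ((Df * g t - f t * Dg) / (g (rho T t) * g t)))].
Proof.
move=> _ _ /kappa_in Tt hf hg; split.
- exact: deriv_add.
- move=> l; have := deriv_mul2 (@deriv_const _ T alpha t l) hf (@cont_const _ T t l).
  by apply: deriv_ext => // ; rewrite mul0r add0r.
- move=> cf cg; split.
    apply: deriv_mul1 => //; exact: cont_atP.
  apply: deriv_mul2 => //; exact: cont_atP.
- move=> cf; rewrite mulf_eq0 negb_or => /andP[h1 h2].
  apply: deriv_inv => //; exact: cont_atP.
- move=> cf cg; rewrite mulf_eq0 negb_or => /andP[h1 h2].
  have cg' : cont_at R T g t by apply: cont_atP.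
  have cf' : cont_at R T f t by apply: cont_atP.
  have hk : is_nabla_frac_deriv T alpha (fun x => (g x)^-1) t
    (- (Dg / (g (rho T t) * g t))) by apply: deriv_inv.
  have := deriv_mul2 hf hk cf'.
  apply: deriv_ext => //; field; by rewrite h1 h2.
Qed.
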